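(* Let $\pi_3=2\int_0^1\frac{\mathrm{d}t}{\sqrt{1-t^6}}$ and let $\mathrm{sleaf}_3:\mathbb{R}\to\mathbb{R}$ be the leaf function of basis $3$. For every integer $m$: (i) if $\frac{\pi_3}{2}(4m-1)\le l\le\frac{\pi_3}{2}(4m+1)$, then $\mathrm{sleaf}_3(2l)=\dfrac{2\,\mathrm{sleaf}_3(l)\sqrt{1-(\mathrm{sleaf}_3(l))^6}}{\sqrt{1+8(\mathrm{sleaf}_3(l))^6}}$; (ii) if $\frac{\pi_3}{2}(4m+1)\le l\le\frac{\pi_3}{2}(4m+3)$, then $\mathrm{sleaf}_3(2l)=-\dfrac{2\,\mathrm{sleaf}_3(l)\sqrt{1-(\mathrm{sleaf}_3(l))^6}}{\sqrt{1+8(\mathrm{sleaf}_3(l))^6}}$.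
   Context: For a natural number $n$, the leaf function $\mathrm{sleaf}_n:\mathbb{R}\to\mathbb{R}$ is the solution of $\frac{\mathrm{d}^2r}{\mathrm{d}l^2}=-n\,r^{2n-1}$ with $r(0)=0$, $r'(0)=1$; it is periodic with period $2\pi_n$, where $\pi_n=2\int_0^1\frac{\mathrm{d}t}{\sqrt{1-t^{2n}}}$, and on $[-\pi_n/2,\pi_n/2]$ it is the inverse of $r\mapsto\int_0^r\frac{\mathrm{d}t}{\sqrt{1-t^{2n}}}$. *)

(* Defs.v *)
From Stdlib Require Import Reals.
From Coquelicot Require Import Coquelicot.
Open Scope R_scope.

Definition pi_n (n : nat) : R :=
  2 * RInt_gen (fun t => / sqrt (1 - t ^ (2 * n))) (at_point 0) (at_left 1).

Definition is_sleaf (n : nat) (r : R -> R) : Prop :=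
  exists r' : R -> R,
    r 0 = 0 /\ r' 0 = 1 /\
    (forall l, is_derive r l (r' l)) /\
    (forall l, is_derive r' l (- INR n * r l ^ (2 * n - 1))).

(* Main.v *)
Require Import Defs.
From Stdlib Require Import Reals ZArith.
From Coquelicot Require Import Coquelicot.
From Stdlib Require Import Lra Psatz Classical.
Open Scope R_scope.


Lemma is_derive_eq (f : R -> R) x l l' : is_derive f x l -> l = l' -> is_derive f x l'.
Proof. intros H ->; exact H. Qed.

Lemma deriv_cont (f df : R -> R) : (forall t, is_derive f t (df t)) -> forall t, continuity_pt f t.
Proof.
  intros H t. apply continuity_pt_filterlim. apply (ex_derive_continuous (V:=R_NormedModule)).
  eexists; apply H.
Qed.

Lemma deriv_continuity (f df : R -> R) : (forall t, is_derive f t (df t)) -> continuity f.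
Proof. intros H t; eapply deriv_cont; eauto. Qed.

Lemma mvt (f df : R -> R) a b : (forall t, is_derive f t (df t)) -> a <= b ->
  exists c, a <= c <= b /\ f b - f a = df c * (b - a).
Proof.
  intros H hab. destruct (MVT_gen f a b df) as [c [hc e]].
  - intros; apply H.
  - intros; eapply deriv_cont; eauto.
  - exists c. rewrite Rmin_left in hc by lra. rewrite Rmax_right in hc by lra. auto.
Qed.

Lemma nonpos_deriv (f df : R -> R) a b : (forall t, is_derive f t (df t)) ->
  (forall t, df t <= 0) -> a <= b -> f b <= f a.
Proof.
  intros H hd hab. destruct (mvt f df a b H hab) as [c [_ e]].
  specialize (hd c). nra.
Qed.

Lemma lip5 a b M : Rabs a <= M -> Rabs b <= M ->
  Rabs (a^5 - b^5) <= 5 * M^4 * Rabs (a - b).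
Proof.
  intros ha hb.
  replace (a^5 - b^5) with ((a - b) * (a^4 + a^3*b + a^2*b^2 + a*b^3 + b^4)) by ring.
  rewrite Rabs_mult, Rmult_comm. apply Rmult_le_compat_r; [apply Rabs_pos|].
  set (A := Rabs a) in *. set (B := Rabs b) in *.
  assert (0 <= A) by apply Rabs_pos. assert (0 <= B) by apply Rabs_pos.
  assert (E: forall i j, Rabs (a^i * b^j) <= M^(i+j)).
  { intros i j. rewrite Rabs_mult, <- !RPow_abs, pow_add.
    apply Rmult_le_compat; try apply pow_le; try apply Rabs_pos; apply pow_incr; split; auto; apply Rabs_pos. }
  pose proof (Rabs_triang (a^4 + a^3*b + a^2*b^2 + a*b^3) (b^4)).
  pose proof (Rabs_triang (a^4 + a^3*b + a^2*b^2) (a*b^3)).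
  pose proof (Rabs_triang (a^4 + a^3*b) (a^2*b^2)).
  pose proof (Rabs_triang (a^4) (a^3*b)).
  pose proof (E 4%nat 0%nat) as E1. pose proof (E 3%nat 1%nat) as E2. pose proof (E 2%nat 2%nat) as E3.
  pose proof (E 1%nat 3%nat) as E4. pose proof (E 0%nat 4%nat) as E5.
  replace (a^4*b^0) with (a^4) in E1 by ring. replace (a^3*b^1) with (a^3*b) in E2 by ring.
  replace (a^1*b^3) with (a*b^3) in E4 by ring. replace (a^0*b^4) with (b^4) in E5 by ring.
  change (M^(4+0)) with (M^4) in E1. change (M^(3+1)) with (M^4) in E2.
  change (M^(2+2)) with (M^4) in E3. change (M^(1+3)) with (M^4) in E4. change (M^(0+4)) with (M^4) in E5.
  lra.
Qed.


Ltac dr f H := match goal with |- context [Derive (fun x : R => f x) ?t] =>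
  change (Derive (fun x : R => f x) t) with (Derive f t); rewrite (is_derive_unique _ _ _ (H t)) end.

Lemma sq0 x : x^2 = 0 -> x = 0.
Proof. intros H; destruct (Req_dec x 0); auto; exfalso; apply (pow_nonzero x 2); auto. Qed.

Lemma ode_uniq (k M t0 : R) (y1 d1 y2 d2 : R -> R) :
  0 <= k -> 0 <= M ->
  (forall t, is_derive y1 t (d1 t)) -> (forall t, is_derive d1 t (- k * y1 t ^ 5)) ->
  (forall t, is_derive y2 t (d2 t)) -> (forall t, is_derive d2 t (- k * y2 t ^ 5)) ->
  (forall t, Rabs (y1 t) <= M) -> (forall t, Rabs (y2 t) <= M) ->
  y1 t0 = y2 t0 -> d1 t0 = d2 t0 -> forall t, y1 t = y2 t /\ d1 t = d2 t.
Proof.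
  intros hk hM Hy1 Hd1 Hy2 Hd2 B1 B2 e0 e0' t.
  set (K := 1 + 5 * k * M ^ 4).
  set (D := fun t => (y1 t - y2 t)^2 + (d1 t - d2 t)^2).
  set (D' := fun t => 2 * (y1 t - y2 t) * (d1 t - d2 t) + 2 * (d1 t - d2 t) * (- k * y1 t ^ 5 + k * y2 t ^ 5)).
  assert (HD : forall t, is_derive D t (D' t)).
  { intros s. unfold D, D'. auto_derive.
    - repeat split; eexists; eauto.
    - dr y1 Hy1.
      dr y2 Hy2.
      dr d1 Hd1.
      dr d2 Hd2. ring. }
  assert (HB : forall t, Rabs (D' t) <= K * D t).
  { intros s. unfold D, D', K.
    pose proof (lip5 (y1 s) (y2 s) M (B1 s) (B2 s)) as L.
    set (a := y1 s - y2 s) in *. set (b := d1 s - d2 s).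
    set (c := y1 s ^ 5 - y2 s ^ 5) in *.
    replace (2 * a * b + 2 * b * (- k * y1 s ^ 5 + k * y2 s ^ 5)) with (2 * a * b + (- 2 * k) * (b * c)) by (unfold c; ring).
    clearbody a b c.
    assert (M4 : 0 <= M^4) by (apply pow_le; lra).
    assert (Rabs (b * c) <= Rabs b * (5 * M^4 * Rabs a)).
    { rewrite Rabs_mult. apply Rmult_le_compat_l; auto. apply Rabs_pos. }
    assert (Rabs a * Rabs b * 2 <= a^2 + b^2).
    { pose proof (Rsqr_abs a); pose proof (Rsqr_abs b); unfold Rsqr in *. pose proof (pow2_ge_0 (Rabs a - Rabs b)). nra. }
    eapply Rle_trans; [apply Rabs_triang|]. rewrite !Rabs_mult.
    rewrite (Rabs_right 2) by lra. rewrite (Rabs_left (-2)) by lra. rewrite (Rabs_right k) by lra.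
    rewrite Rabs_mult in H.
    assert (k * (Rabs b * Rabs c) <= k * (Rabs b * (5 * M ^ 4 * Rabs a))) by (apply Rmult_le_compat_l; lra).
    assert (k * M^4 * (Rabs a * Rabs b * 2) <= k * M^4 * (a ^ 2 + b ^ 2)) by (apply Rmult_le_compat_l; nra).
    nra. }
  assert (D0 : D t0 = 0) by (unfold D; rewrite e0, e0'; ring).
  assert (Dpos : forall t, 0 <= D t) by (intros; unfold D; apply Rplus_le_le_0_compat; apply pow2_ge_0).
  assert (Dt : D t = 0).
  { destruct (Rle_dec t0 t) as [h|h].
    - set (phi := fun t => D t * exp (- K * (t - t0))).
      assert (Hphi : forall s, is_derive phi s ((D' s - K * D s) * exp (- K * (s - t0)))).
      { intros s. unfold phi. auto_derive.
        - eexists; apply HD.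
        - replace (Derive _ s) with (D' s) by (symmetry; apply is_derive_unique; apply HD). change (s + - t0) with (s - t0). ring. }
      pose proof (nonpos_deriv phi _ t0 t Hphi) as P.
      assert (P' : phi t <= phi t0).
      { apply P; auto. intros s. pose proof (HB s). pose proof (exp_pos (- K * (s - t0))).
        apply Rabs_le_between in H. nra. }
      unfold phi in P'. rewrite D0 in P'. pose proof (exp_pos (- K * (t - t0))). pose proof (Dpos t). nra.
    - set (phi := fun t => - D t * exp (K * (t - t0))).
      assert (Hphi : forall s, is_derive phi s (- (D' s + K * D s) * exp (K * (s - t0)))).
      { intros s. unfold phi. auto_derive.
        - eexists; apply HD.
        - replace (Derive _ s) with (D' s) by (symmetry; apply is_derive_unique; apply HD). change (s + - t0) with (s - t0). ring. }
      pose proof (nonpos_deriv phi _ t t0 Hphi) as P.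
      assert (P' : phi t0 <= phi t).
      { apply P; try lra. intros s. pose proof (HB s). pose proof (exp_pos (K * (s - t0))).
        apply Rabs_le_between in H. nra. }
      unfold phi in P'. rewrite D0 in P'. pose proof (exp_pos (K * (t - t0))). pose proof (Dpos t). nra. }
  unfold D in Dt. pose proof (pow2_ge_0 (y1 t - y2 t)). pose proof (pow2_ge_0 (d1 t - d2 t)).
  assert (E1 : (y1 t - y2 t)^2 = 0) by lra. assert (E2 : (d1 t - d2 t)^2 = 0) by lra.
  apply sq0 in E1. apply sq0 in E2. split; lra.
Qed.


Definition SL (r r' : R -> R) := r 0 = 0 /\ r' 0 = 1 /\ (forall l, is_derive r l (r' l)) /\
  (forall l, is_derive r' l (-3 * r l ^ 5)).

Lemma cont_eps f x : continuity_pt f x -> forall eps, 0 < eps ->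
  exists d, 0 < d /\ forall y, Rabs (y - x) < d -> Rabs (f y - f x) < eps.
Proof.
  intros H eps he. destruct (H eps he) as [d [hd Hd]]. exists d; split; auto.
  intros y hy. destruct (Req_dec y x) as [->|ne].
  - rewrite Rminus_diag, Rabs_R0; auto.
  - apply (Hd y). split; [split; auto; exact I|]. exact hy.
Qed.

Lemma const_deriv (f : R -> R) : (forall t, is_derive f t 0) -> forall t, f t = f 0.
Proof.
  intros H t. destruct (Rle_dec 0 t).
  - destruct (mvt f (fun _ => 0) 0 t H r) as [c [_ e]]. lra.
  - destruct (mvt f (fun _ => 0) t 0 H) as [c [_ e]]; lra.
Qed.

Section S.
Variables r r' : R -> R.
Hypothesis H : SL r r'.

Lemma r0 : r 0 = 0. Proof. apply H. Qed.
Lemma r'0 : r' 0 = 1. Proof. apply H. Qed.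
Lemma dr t : is_derive r t (r' t). Proof. apply H. Qed.
Lemma dr' t : is_derive r' t (-3 * r t ^ 5). Proof. apply H. Qed.

Lemma energy t : r' t ^ 2 + r t ^ 6 = 1.
Proof.
  assert (E : forall t, is_derive (fun t => r' t ^ 2 + r t ^ 6) t 0).
  { intros s. auto_derive.
    - repeat split; eexists; [apply dr'|apply dr].
    - replace (Derive _ s) with (-3 * r s ^ 5) by (symmetry; apply is_derive_unique; apply dr').
      replace (Derive _ s) with (r' s) by (symmetry; apply is_derive_unique; apply dr). ring. }
  rewrite (const_deriv _ E t). rewrite r0, r'0. ring.
Qed.

Lemma pow6_le1 x : x ^ 6 <= 1 -> Rabs x <= 1.
Proof.
  intros h. destruct (Rle_dec (Rabs x) 1); auto.
  exfalso. pose proof (Rlt_pow_R1 (Rabs x) 6 ltac:(lra) ltac:(lia)).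
  rewrite RPow_abs in H0. rewrite Rabs_right in H0. lra.
  replace (x^6) with ((x^3)^2) by ring. apply Rle_ge, pow2_ge_0.
Qed.

Lemma rbound t : Rabs (r t) <= 1.
Proof. apply pow6_le1. pose proof (energy t). pose proof (pow2_ge_0 (r' t)). lra. Qed.

Lemma r'bound t : Rabs (r' t) <= 1.
Proof.
  pose proof (energy t). assert (0 <= r t ^ 6) by (replace (r t ^ 6) with ((r t ^ 3)^2) by ring; apply pow2_ge_0).
  assert (h : (r' t)^2 <= 1) by lra.
  apply pow6_le1. replace (r' t ^ 6) with ((r' t ^2)^3) by ring.
  assert (0 <= r' t ^ 2) by apply pow2_ge_0.
  replace 1 with (1^3) by ring. apply pow_incr. lra.
Qed.

Lemma exists_neg : exists t, 0 < t /\ r' t <= 0.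
Proof.
  apply NNPP. intros Hn.
  assert (P : forall t, 0 <= t -> 0 < r' t).
  { intros t ht. destruct (Req_dec t 0) as [->|]. rewrite r'0; lra.
    apply Rnot_le_lt. intros hl. apply Hn. exists t. split; auto. lra. }
  set (a := r 1).
  assert (ha : 0 < a).
  { destruct (mvt r r' 0 1 dr ltac:(lra)) as [c [hc e]]. rewrite r0 in e.
    pose proof (P c ltac:(lra)). unfold a. nra. }
  assert (Ra : forall t, 1 <= t -> a <= r t).
  { intros t ht. destruct (mvt r r' 1 t dr ht) as [c [hc e]].
    pose proof (P c ltac:(lra)). unfold a. nra. }
  assert (a5 : 0 < a^5) by (apply pow_lt; lra).
  set (t := 2 + / (3 * a^5)).
  assert (ht : 1 <= t).
  { unfold t. assert (0 < / (3 * a^5)) by (apply Rinv_0_lt_compat; lra). lra. }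
  destruct (mvt r' (fun t => -3 * r t ^ 5) 1 t dr' ht) as [c [hc e]].
  assert (a^5 <= r c ^ 5) by (apply pow_incr; split; [lra| apply Ra; lra]).
  pose proof (P t ltac:(lra)). pose proof (r'bound 1). apply Rabs_le_between in H2.
  assert (3 * a^5 * (t - 1) >= 3 * a ^5 * (1 + / (3 * a^5))).
  { apply Rle_ge, Rmult_le_compat_l. lra. unfold t. lra. }
  rewrite Rmult_plus_distr_l, Rinv_r in H3 by lra.
  assert (0 <= 3 * a^5 * / (3 * a^5)) by (apply Rmult_le_pos; [lra|left; apply Rinv_0_lt_compat; lra]).
  assert (3 * r c ^ 5 * (t - 1) >= 3 * a^5 * (t - 1)).
  { apply Rle_ge, Rmult_le_compat_r; lra. }
  nra.
Qed.

End S.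


Section S.
Variables r r' : R -> R.
Hypothesis H : SL r r'.

Lemma first_zero : exists tau, 0 < tau /\ r' tau = 0 /\ (forall s, 0 <= s < tau -> 0 < r' s).
Proof.
  destruct (exists_neg r r' H) as [t1 [ht1 ht1']].
  set (E := fun x => 0 <= x /\ forall s, 0 <= s <= x -> 0 < r' s).
  assert (bE : bound E).
  { exists t1. intros x [hx Hx]. destruct (Rle_dec x t1); auto.
    pose proof (Hx t1 ltac:(lra)). lra. }
  assert (nE : exists x, E x).
  { exists 0. split. lra. intros s hs. replace s with 0 by lra. rewrite (r'0 _ _ H). lra. }
  destruct (completeness E bE nE) as [tau [ub lub]].
  assert (t0 : 0 <= tau) by (apply ub; destruct nE; unfold E; split; [lra|]; intros s hs; replace s with 0 by lra; rewrite (r'0 _ _ H); lra).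
  assert (pos : forall s, 0 <= s < tau -> 0 < r' s).
  { intros s hs. apply NNPP. intros hn.
    assert (is_upper_bound E s).
    { intros x [hx Hx]. destruct (Rle_dec x s); auto. exfalso. apply hn. apply Hx. lra. }
    pose proof (lub s H0). lra. }
  pose proof (deriv_cont r' _ (dr' _ _ H) tau) as ct.
  destruct (Rtotal_order (r' tau) 0) as [neg|[z|p]].
  - exfalso. destruct (cont_eps _ _ ct (- r' tau) ltac:(lra)) as [d [hd Hd]].
    assert (tau <> 0) by (intros ->; rewrite (r'0 _ _ H) in neg; lra).
    set (s := Rmax 0 (tau - d/2)).
    assert (0 <= s < tau /\ Rabs (s - tau) < d).
    { unfold s, Rmax. destruct (Rle_dec 0 (tau - d/2)); split; try split; try lra;
      apply Rabs_def1; lra. }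
    destruct H1. pose proof (pos s H1). pose proof (Hd s H2). apply Rabs_def2 in H4. lra.
  - exists tau. split; [|split; auto].
    destruct (Req_dec tau 0) as [e|]; [|lra]. rewrite e, (r'0 _ _ H) in z. lra.
  - exfalso. destruct (cont_eps _ _ ct (r' tau) ltac:(lra)) as [d [hd Hd]].
    assert (E (tau + d/2)).
    { split. lra. intros s hs. destruct (Rlt_dec s tau). apply pos; lra.
      assert (Rabs (s - tau) < d) by (apply Rabs_def1; lra).
      pose proof (Hd s H0). apply Rabs_def2 in H1. lra. }
    pose proof (ub _ H0). lra.
Qed.

Lemma peak : exists tau, 0 < tau /\ r' tau = 0 /\ r tau = 1 /\ (forall s, 0 <= s < tau -> 0 < r' s).
Proof.
  destruct first_zero as [tau [ht [z pos]]]. exists tau. repeat split; auto.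
  assert (p1 : 0 < r (tau/2)).
  { destruct (mvt r r' 0 (tau/2) (dr _ _ H) ltac:(lra)) as [c [hc e]]. rewrite (r0 _ _ H) in e.
    pose proof (pos c ltac:(lra)). nra. }
  assert (p2 : r (tau/2) <= r tau).
  { destruct (mvt r r' (tau/2) tau (dr _ _ H) ltac:(lra)) as [c [hc e]].
    assert (0 <= r' c) by (destruct (Req_dec c tau) as [->|]; [lra| left; apply pos; lra]). nra. }
  pose proof (energy _ _ H tau). rewrite z in H0.
  set (x := r tau) in *. clearbody x.
  assert (e : (x - 1) * (x^5 + x^4 + x^3 + x^2 + x + 1) = 0) by (ring_simplify; lra).
  apply Rmult_integral in e. destruct e. lra.
  assert (0 < x^5 + x^4 + x^3 + x^2 + x + 1).
  { assert (0 < x) by lra. pose proof (pow_lt x 5 H2). pose proof (pow_lt x 4 H2). pose proof (pow_lt x 3 H2). pose proof (pow_lt x 2 H2). lra. }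
  lra.
Qed.

End S.


Definition f6 := fun t : R => / sqrt (1 - t ^ (2 * 3)).

Lemma f6_cont y : y ^ 6 < 1 -> continuous f6 y.
Proof.
  intros h. apply (ex_derive_continuous (V:=R_NormedModule)). unfold f6. auto_derive.
  change (2*3)%nat with 6%nat. split; [lra|split; auto].
  apply Rgt_not_eq, sqrt_lt_R0. lra.
Qed.

Section S.
Variables r r' : R -> R.
Hypothesis H : SL r r'.
Variable tau : R.
Hypothesis ht : 0 < tau.
Hypothesis hz : r' tau = 0.
Hypothesis h1 : r tau = 1.
Hypothesis hpos : forall s, 0 <= s < tau -> 0 < r' s.

Lemma r6_lt s : 0 <= s < tau -> r s ^ 6 < 1.
Proof. intros hs. pose proof (hpos s hs). pose proof (energy _ _ H s). nra. Qed.

Lemma int_b b : 0 <= b < tau -> is_RInt f6 0 (r b) b.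
Proof.
  intros hb.
  assert (C1 : forall x, Rmin 0 b <= x <= Rmax 0 b -> continuous f6 (r x)).
  { intros x hx. rewrite Rmin_left, Rmax_right in hx by lra. apply f6_cont, r6_lt. lra. }
  assert (C2 : forall x, Rmin 0 b <= x <= Rmax 0 b -> is_derive r x (r' x) /\ continuous r' x).
  { intros x _. split. apply (dr _ _ H). apply (ex_derive_continuous (V:=R_NormedModule)).
    eexists; apply (dr' _ _ H). }
  pose proof (is_RInt_comp f6 r r' 0 b C1 C2) as I1.
  rewrite (r0 _ _ H) in I1.
  assert (I2 : is_RInt (fun _ => 1) 0 b (RInt f6 0 (r b))).
  { eapply is_RInt_ext; [|exact I1]. intros x hx. rewrite Rmin_left, Rmax_right in hx by lra.
    unfold f6. change (2*3)%nat with 6%nat. pose proof (energy _ _ H x). pose proof (hpos x ltac:(lra)).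
    replace (1 - r x ^ 6) with (r' x ^ 2) by lra. rewrite sqrt_pow2 by lra.
    change (scal (r' x) (/ r' x) = 1). unfold scal; simpl. unfold mult; simpl. field. lra. }
  pose proof (is_RInt_const 0 b 1) as I3.
  apply (is_RInt_unique (V:=R_CompleteNormedModule)) in I2. apply (is_RInt_unique (V:=R_CompleteNormedModule)) in I3.
  assert (E : RInt f6 0 (r b) = b).
  { rewrite <- I2, I3. unfold scal; simpl. unfold mult; simpl. ring. }
  assert (EX : ex_RInt f6 0 (r b)).
  2: { pose proof (RInt_correct _ _ _ EX) as RC. rewrite E in RC. exact RC. }
  apply (ex_RInt_continuous (V:=R_CompleteNormedModule)).
  intros z hz'. apply f6_cont.
  assert (0 <= r b) .
  { destruct (mvt r r' 0 b (dr _ _ H) ltac:(lra)) as [c [hc e]]. rewrite (r0 _ _ H) in e.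
    assert (0 <= r' c) by (destruct (Req_dec c b); [subst; left; apply hpos; lra| left; apply hpos; lra]). nra. }
  rewrite Rmin_left, Rmax_right in hz' by lra.
  pose proof (r6_lt b hb). assert (0 <= z ^ 6) by (replace (z^6) with ((z^3)^2) by ring; apply pow2_ge_0).
  assert (z^6 <= r b ^ 6) by (apply pow_incr; lra). lra.
Qed.

Lemma int_gen : is_RInt_gen f6 (at_point 0) (at_left 1) tau.
Proof.
  unfold is_RInt_gen, filterlimi, filter_le, filtermapi.
  intros P [eps HP].
  set (b0 := Rmax (tau/2) (tau - eps/2)).
  assert (hb0 : 0 <= b0 < tau /\ tau - b0 <= eps / 2).
  { unfold b0, Rmax. pose proof (cond_pos eps). destruct (Rle_dec (tau/2) (tau - eps/2)); lra. }
  pose proof (r6_lt b0 ltac:(lra)) as hr6.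
  assert (hrb : r b0 < 1).
  { assert (h' : Rabs (r b0) <= 1) by (apply pow6_le1; lra). apply Rabs_le_between in h'.
    destruct (Req_dec (r b0) 1) as [e|]; [|lra]. rewrite e in hr6. lra. }
  apply (Filter_prod _ _ _ (fun a => a = 0) (fun y => r b0 < y < 1)).
  - reflexivity.
  - unfold at_left, within. exists (mkposreal (1 - r b0) ltac:(lra)).
    intros y hy hy1. change (Rabs (y - 1) < 1 - r b0) in hy. apply Rabs_def2 in hy. simpl in hy. lra.
  - intros a y -> [hy1 hy2].
    destruct (IVT_gen r b0 tau y (deriv_continuity r r' (dr _ _ H))) as [x [hx e]].
    { rewrite Rmin_left, Rmax_right; lra. }
    rewrite Rmin_left, Rmax_right in hx by lra.
    assert (x <> tau) by (intros ->; lra).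
    exists x. split.
    + rewrite <- e. apply int_b. lra.
    + apply HP. change (Rabs (x - tau) < eps). apply Rabs_def1; lra.
Qed.

Lemma pi3 : pi_n 3 = 2 * tau.
Proof.
  unfold pi_n. change (fun t : R => / sqrt (1 - t ^ (2 * 3))) with f6.
  rewrite (is_RInt_gen_unique f6 tau int_gen). reflexivity.
Qed.

End S.


Definition Q s := sqrt (1 + 8 * s^6).
Definition Phi s := 2 * s / Q s.
Definition Psi s := (2 - 40 * s^6 - 16 * s^12) / ((1 + 8 * s^6) * Q s).
Definition Phi' s := 2 / Q s - 48 * s^6 / (Q s * Q s * Q s).
Definition Psi' s := ((-240 * s^5 - 192 * s^11) * ((1 + 8 * s^6) * Q s) -
   (2 - 40 * s^6 - 16 * s^12) * (48 * s^5 * Q s + (1 + 8 * s^6) * (48 * s^5 / (2 * Q s)))) /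
   (((1 + 8 * s^6) * Q s) * ((1 + 8 * s^6) * Q s)).

Lemma w_pos s : 0 < 1 + 8 * s^6.
Proof. assert (0 <= s^6) by (replace (s^6) with ((s^3)^2) by ring; apply pow2_ge_0). lra. Qed.
Lemma Q_pos s : 0 < Q s.
Proof. apply sqrt_lt_R0, w_pos. Qed.
Lemma Q_sq s : Q s * Q s = 1 + 8 * s^6.
Proof. apply sqrt_sqrt. left; apply w_pos. Qed.

Lemma dPhi s : is_derive Phi s (Phi' s).
Proof.
  unfold Phi, Phi', Q. pose proof (w_pos s). pose proof (Q_pos s). unfold Q in H0. auto_derive.
  - simpl in *. repeat split; lra.
  - simpl in *. field. lra.
Qed.

Lemma dPsi s : is_derive Psi s (Psi' s).
Proof.
  unfold Psi, Psi', Q. pose proof (w_pos s). pose proof (Q_pos s). unfold Q in H0. auto_derive.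
  - simpl in *. repeat split; try lra. apply Rmult_integral_contrapositive; split; lra.
  - simpl in *. field. lra.
Qed.


Lemma Phi_id s c : c^2 = 1 - s^6 -> c * Phi' s * c + Phi s * (-3 * s^5) = Psi s.
Proof.
  intros Hc. replace (c * Phi' s * c) with (c^2 * Phi' s) by ring. rewrite Hc.
  unfold Phi', Phi, Psi. pose proof (Q_pos s). pose proof (w_pos s).
  replace (Q s * Q s * Q s) with (Q s * (1 + 8 * s^6)) by (rewrite <- Q_sq; ring).
  field. lra.
Qed.

Lemma Psi_id s c : c^2 = 1 - s^6 -> c * Psi' s = -12 * (Phi s * c)^5.
Proof.
  intros Hc. pose proof (Q_pos s). pose proof (w_pos s).
  unfold Psi'.
  replace ((1 + 8 * s^6) * (48 * s^5 / (2 * Q s))) with (24 * s^5 * Q s)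
    by (rewrite <- Q_sq; field; lra).
  replace (((1 + 8 * s^6) * Q s) * ((1 + 8 * s^6) * Q s)) with ((1 + 8 * s^6) * (1 + 8 * s^6) * (1 + 8 * s^6))
    by (rewrite <- Q_sq at 3; ring).
  replace ((Phi s * c)^5) with (32 * s^5 * c * (c^2)^2 * Q s / ((Q s * Q s) * (Q s * Q s) * (Q s * Q s)))
    by (unfold Phi; field; lra).
  rewrite Hc, Q_sq. field. lra.
Qed.

Lemma Phi_bound s : Rabs s <= 1 -> Rabs (Phi s) <= 2.
Proof.
  intros hs. unfold Phi, Rdiv. pose proof (Q_pos s). pose proof (Q_sq s). pose proof (w_pos s).
  assert (0 <= s^6) by (replace (s^6) with ((s^3)^2) by ring; apply pow2_ge_0).
  assert (1 <= Q s) by nra.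
  assert (Qi : / Q s <= 1).
  { pose proof (Rinv_r (Q s) ltac:(lra)). assert (0 < / Q s) by (apply Rinv_0_lt_compat; lra). nra. }
  rewrite !Rabs_mult. rewrite (Rabs_right 2) by lra. rewrite (Rabs_right (/ Q s)) by (left; apply Rinv_0_lt_compat; lra).
  pose proof (Rabs_pos s). assert (0 < / Q s) by (apply Rinv_0_lt_compat; lra). nra.
Qed.

Section S.
Variables r r' : R -> R.
Hypothesis H : SL r r'.

Ltac solve_der :=
  auto_derive; [ repeat split; repeat match goal with |- ex_derive (fun x : R => r x) ?t => exists (r' t); apply (dr _ _ H) | |- ex_derive (fun x : R => r' x) ?t => exists (-3 * r t ^ 5); apply (dr' _ _ H) end |
   repeat match goal with
   | |- context [Derive (fun x : R => r x) ?t] => replace (Derive (fun x : R => r x) t) with (r' t) by (symmetry; apply is_derive_unique; apply (dr _ _ H))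
   | |- context [Derive (fun x : R => r' x) ?t] => replace (Derive (fun x : R => r' x) t) with (-3 * r t ^ 5) by (symmetry; apply is_derive_unique; apply (dr' _ _ H))
   end; unfold Rminus; ring ].

Lemma doubling l : r (2 * l) = Phi (r l) * r' l.
Proof.
  apply (ode_uniq 12 2 0 (fun x => r (2 * x)) (fun x => 2 * r' (2 * x))
     (fun x => Phi (r x) * r' x) (fun x => Psi (r x))); try lra.
  - intros t; cbv beta. solve_der.
  - intros t; cbv beta. solve_der.
  - intros t; cbv beta. eapply is_derive_eq.
    + apply (is_derive_mult (fun x => Phi (r x)) r').
      * apply (is_derive_comp Phi r). apply dPhi. apply (dr _ _ H).
      * apply (dr' _ _ H).
      * intros; apply Rmult_comm.
    + unfold plus, mult, scal; simpl. unfold mult; simpl.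
      rewrite <- (Phi_id (r t) (r' t)). ring.
      pose proof (energy _ _ H t). lra.
  - intros t; cbv beta. eapply is_derive_eq.
    + apply (is_derive_comp Psi r). apply dPsi. apply (dr _ _ H).
    + unfold scal; simpl. unfold mult; simpl. apply Psi_id.
      pose proof (energy _ _ H t). lra.
  - intros t; cbv beta. pose proof (rbound _ _ H (2 * t)). lra.
  - intros t; cbv beta. rewrite Rabs_mult.
    pose proof (Phi_bound _ (rbound _ _ H t)). pose proof (r'bound _ _ H t).
    pose proof (Rabs_pos (Phi (r t))). pose proof (Rabs_pos (r' t)). nra.
  - cbv beta. rewrite Rmult_0_r, (r0 _ _ H). unfold Phi. unfold Rdiv. ring.
  - cbv beta. rewrite Rmult_0_r, (r0 _ _ H), (r'0 _ _ H). unfold Psi, Q.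
    replace (1 + 8 * 0^6) with 1 by ring. rewrite sqrt_1. field.
Qed.

End S.


Section S.
Variables r r' : R -> R.
Hypothesis HS : SL r r'.
Variable tau : R.
Hypothesis ht : 0 < tau.
Hypothesis hz : r' tau = 0.
Hypothesis h1 : r tau = 1.
Hypothesis hpos : forall s, 0 <= s < tau -> 0 < r' s.

Ltac solve_der :=
  auto_derive; [ repeat split; repeat match goal with |- ex_derive (fun x : R => r x) ?t => exists (r' t); apply (dr _ _ HS) | |- ex_derive (fun x : R => r' x) ?t => exists (-3 * r t ^ 5); apply (dr' _ _ HS) end |
   repeat match goal with
   | |- context [Derive (fun x : R => r x) ?t] => replace (Derive (fun x : R => r x) t) with (r' t) by (symmetry; apply is_derive_unique; apply (dr _ _ HS))
   | |- context [Derive (fun x : R => r' x) ?t] => replace (Derive (fun x : R => r' x) t) with (-3 * r t ^ 5) by (symmetry; apply is_derive_unique; apply (dr' _ _ HS))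
   end; unfold Rminus; ring ].

Lemma refl x : r (tau + x) = r (tau - x) /\ r' (tau + x) = - r' (tau - x).
Proof.
  apply (ode_uniq 3 1 0 (fun x => r (tau + x)) (fun x => r' (tau + x))
     (fun x => r (tau - x)) (fun x => - r' (tau - x))); try lra;
  try (intros t; cbv beta; solve_der).
  - intros t; apply (rbound _ _ HS).
  - intros t; apply (rbound _ _ HS).
  - cbv beta. rewrite Rplus_0_r, Rminus_0_r. auto.
  - cbv beta. rewrite Rplus_0_r, Rminus_0_r, hz. lra.
Qed.

Lemma anti x : r (x + 2 * tau) = - r x /\ r' (x + 2 * tau) = - r' x.
Proof.
  apply (ode_uniq 3 1 0 (fun x => r (x + 2 * tau)) (fun x => r' (x + 2 * tau))
     (fun x => - r x) (fun x => - r' x)); try lra;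
  try (intros t; cbv beta; solve_der).
  - intros t; apply (rbound _ _ HS).
  - intros t; rewrite Rabs_Ropp; apply (rbound _ _ HS).
  - cbv beta. destruct (refl tau) as [e _]. replace (0 + 2 * tau) with (tau + tau) by ring.
    rewrite e, Rminus_diag, (r0 _ _ HS). lra.
  - cbv beta. destruct (refl tau) as [_ e]. replace (0 + 2 * tau) with (tau + tau) by ring.
    rewrite e, Rminus_diag. lra.
Qed.

Lemma even' x : r' (- x) = r' x.
Proof.
  destruct (ode_uniq 3 1 0 (fun x => r (- x)) (fun x => - r' (- x))
     (fun x => - r x) (fun x => - r' x)) with (t := x) as [_ e]; try lra;
  try (intros t; cbv beta; solve_der).
  - intros t; apply (rbound _ _ HS).
  - intros t; rewrite Rabs_Ropp; apply (rbound _ _ HS).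
  - cbv beta. rewrite Ropp_0, (r0 _ _ HS). lra.
  - cbv beta. rewrite Ropp_0. lra.
Qed.

Lemma nonneg x : - tau <= x <= tau -> 0 <= r' x.
Proof.
  assert (P : forall x, 0 <= x <= tau -> 0 <= r' x).
  { intros y hy. destruct (Req_dec y tau) as [->|]. lra. left; apply hpos; lra. }
  intros hx. destruct (Rle_dec 0 x). apply P; lra.
  rewrite <- even'. apply P; lra.
Qed.

Lemma per_nat n x : r' (x + 4 * INR n * tau) = r' x.
Proof.
  induction n. simpl. f_equal; ring.
  rewrite S_INR. replace (x + 4 * (INR n + 1) * tau) with ((x + 4 * INR n * tau + 2 * tau) + 2 * tau) by ring.
  rewrite (proj2 (anti _)), (proj2 (anti _)). lra.
Qed.

Lemma per m x : r' (x + 4 * IZR m * tau) = r' x.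
Proof.
  destruct m as [|p|p].
  - simpl. f_equal; ring.
  - rewrite <- (positive_nat_Z p), <- (INR_IZR_INZ (Pos.to_nat p)). apply per_nat.
  - rewrite <- Pos2Z.opp_pos, opp_IZR, <- (positive_nat_Z p), <- (INR_IZR_INZ (Pos.to_nat p)).
    set (y := x + 4 * - INR (Pos.to_nat p) * tau).
    transitivity (r' (y + 4 * INR (Pos.to_nat p) * tau)). symmetry; apply per_nat.
    f_equal; unfold y; ring.
Qed.

Lemma sign1 m l : tau * (4 * IZR m - 1) <= l <= tau * (4 * IZR m + 1) -> 0 <= r' l.
Proof.
  intros hl. replace l with ((l - 4 * IZR m * tau) + 4 * IZR m * tau) by ring.
  rewrite per. apply nonneg. nra.
Qed.

Lemma sign2 m l : tau * (4 * IZR m + 1) <= l <= tau * (4 * IZR m + 3) -> r' l <= 0.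
Proof.
  intros hl. replace l with (((l - 4 * IZR m * tau - 2 * tau) + 2 * tau) + 4 * IZR m * tau) by ring.
  rewrite per, (proj2 (anti _)). assert (0 <= r' (l - 4 * IZR m * tau - 2 * tau)) by (apply nonneg; nra). lra.
Qed.

End S.

Theorem mainTheorem6 (sleaf3 : R -> R) (Hs : is_sleaf 3 sleaf3) (m : Z) (l : R) :
  (pi_n 3 / 2 * (4 * IZR m - 1) <= l <= pi_n 3 / 2 * (4 * IZR m + 1) ->
   sleaf3 (2 * l) =
     2 * sleaf3 l * sqrt (1 - sleaf3 l ^ 6) / sqrt (1 + 8 * sleaf3 l ^ 6)) /\
  (pi_n 3 / 2 * (4 * IZR m + 1) <= l <= pi_n 3 / 2 * (4 * IZR m + 3) ->
   sleaf3 (2 * l) =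
     - (2 * sleaf3 l * sqrt (1 - sleaf3 l ^ 6) / sqrt (1 + 8 * sleaf3 l ^ 6))).
Proof.
  destruct Hs as [r' [e0 [e1 [d1 d2]]]].
  assert (HS : SL sleaf3 r').
  { split; [|split; [|split]]; auto. intros t. replace (-3 * sleaf3 t ^ 5) with (- INR 3 * sleaf3 t ^ (2 * 3 - 1)).
    apply d2. simpl. ring. }
  destruct (peak _ _ HS) as [tau [ht [hz [h1 hpos]]]].
  rewrite (pi3 _ _ HS tau ht h1 hpos). replace (2 * tau / 2) with tau by field.
  pose proof (doubling _ _ HS l) as Db. pose proof (energy _ _ HS l) as En.
  unfold Phi, Q in Db. rewrite Db.
  assert (Qp : 0 < sqrt (1 + 8 * sleaf3 l ^ 6)) by (apply (Q_pos (sleaf3 l))).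
  replace (1 - sleaf3 l ^ 6) with (r' l ^ 2) by lra.
  split; intros hl.
  - rewrite sqrt_pow2 by (apply (sign1 _ _ HS tau hz hpos m l hl)). field. lra.
  - replace (r' l ^ 2) with ((- r' l) ^ 2) by ring.
    rewrite sqrt_pow2 by (pose proof (sign2 _ _ HS tau hz hpos m l hl); lra). field. lra.
Qed.
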